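(* Let $S$ be a finite set of discrete probability distributions. For $x\in(0,1]$ define $C_S(x)$ to be the smallest $y\in[0,1]$ with $\textsc{Rem-Mass}^{\textsc{advanced}}_S(y)\ge x$. Then $C_S$ is non-decreasing, and whenever, during the run of the greedy coupling algorithm on $S$, there is $x$ mass left to be coupled, the next state created by the greedy algorithm has mass at least $C_S(x)$.
   Context: Distributions are finite vectors $p(1)\ge\dots\ge p(n)\ge0$ summing to $1$. Greedy coupling algorithm: maintain the remaining masses of the states of each distribution in $S$. Repeatedly: let $r=\min_{p\in S}\max_j p(j)$; if $r=0$ stop; otherwise create a coupling state of mass $r$ and subtract $r$ from the largest remaining state of every distribution (ties broken arbitrarily). For $y\in[0,1]$, $$\textsc{Rem-Mass}^{\textsc{advanced}}_S(y)=\max_{p\in S}\sum_{j=1}^n\begin{cases}y & y\le p(j)/2,\\ p(j)/2 & p(j)/2<y<p(j),\\ p(j) & p(j)\le y.\end{cases}$$ *)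

(* Defs.v *)
From HB Require Import structures.
From mathcomp Require Import all_boot all_order all_algebra.
From mathcomp Require Import boolp classical_sets reals.
Set Implicit Arguments. Unset Strict Implicit. Unset Printing Implicit Defensive.
Import Order.TTheory GRing.Theory Num.Theory.
Local Open Scope ring_scope.
Local Open Scope classical_set_scope.

Definition is_distribution {R : realType} {n : nat} (p : 'I_n -> R) : Prop :=
  (forall j, 0 <= p j) /\
  (forall i j : 'I_n, (i <= j)%N -> p j <= p i) /\
  \sum_(j < n) p j = 1.

Definition rm_term {R : realType} (pj y : R) : R :=
  if y <= pj / 2 then y else if y < pj then pj / 2 else pj.

Definition rem_mass_adv {R : realType} {m n : nat} (S : 'I_m -> 'I_n -> R) (y : R) : R :=
  \big[Num.max/0]_(i < m) \sum_(j < n) rm_term (S i j) y.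

Definition C_S {R : realType} {m n : nat} (S : 'I_m -> 'I_n -> R) (x : R) : R :=
  inf [set y : R | 0 <= y <= 1 /\ x <= rem_mass_adv S y].

Definition maxrem {R : realType} {m n : nat} (q : 'I_m -> 'I_n -> R) (i : 'I_m) : R :=
  \big[Num.max/0]_(j < n) q i j.

(* One step of the greedy coupling algorithm (ties broken arbitrarily):
   from remaining masses q, a coupling state of mass r > 0 is created, where
   r = min_i max_j q i j, and r is subtracted from a largest remaining state
   of every distribution, giving q'. *)
Definition greedy_step {R : realType} {m n : nat}
    (q : 'I_m -> 'I_n -> R) (r : R) (q' : 'I_m -> 'I_n -> R) : Prop :=
  0 < r /\
  (exists i, r = maxrem q i) /\ (forall i, r <= maxrem q i) /\
  forall i, exists j0 : 'I_n,
    q i j0 = maxrem q i /\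
    q' i j0 = q i j0 - r /\
    forall j, j != j0 -> q' i j = q i j.

(* Main.v *)
Require Import Defs.
From HB Require Import structures.
From mathcomp Require Import all_boot all_order all_algebra.
From mathcomp Require Import boolp classical_sets reals.
From mathcomp Require Import lra zify.
Import Order.TTheory GRing.Theory Num.Theory.
Local Open Scope ring_scope.

Lemma C_le (R : realType) (m n : nat) (S : 'I_m -> 'I_n -> R) (x y : R) :
  0 <= y <= 1 -> x <= rem_mass_adv S y -> C_S S x <= y.
Proof.
move=> hy hx; rewrite /C_S; apply: ge_inf.
  by exists 0 => z [/andP[]].
by split.
Qed.

Lemma dist_le1 (R : realType) (n : nat) (p : 'I_n -> R) j :
  is_distribution p -> p j <= 1.
Proof.
move=> [h0 [_ hs]]; rewrite -hs (bigD1 j) //= lerDl.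
by apply: sumr_ge0 => i _; exact: h0.
Qed.

Lemma rem1 (R : realType) (m n : nat) (S : 'I_m -> 'I_n -> R)
  (hm : (0 < m)%N) (hS : forall i, is_distribution (S i)) :
  1 <= rem_mass_adv S 1.
Proof.
rewrite /rem_mass_adv.
apply: le_trans (le_bigmax _ _ (Ordinal hm)).
have [_ [_ hs]] := hS (Ordinal hm).
rewrite -{1}hs le_eqVlt; apply/orP; left; apply/eqP.
apply: eq_bigr => j _; rewrite /rm_term.
have h1 := @dist_le1 _ _ _ j (hS (Ordinal hm)).
have [H|H] := leP 1 (S (Ordinal hm) j / 2); first lra.
by have [H2|H2] := ltP 1 (S (Ordinal hm) j); lra.
Qed.

Lemma maxrem_ge (R : realType) (m n : nat) (q : 'I_m -> 'I_n -> R) i j :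
  q i j <= maxrem q i.
Proof. exact: le_bigmax. Qed.

Lemma maxrem_mono (R : realType) (m n : nat) (q q' : 'I_m -> 'I_n -> R) i :
  (forall j, q' i j <= q i j) -> maxrem q' i <= maxrem q i.
Proof. by move=> h; apply: le_bigmax2 => j _; exact: h. Qed.

Lemma step_le (R : realType) (m n : nat) (q q' : 'I_m -> 'I_n -> R) r :
  greedy_step q r q' -> forall i j, q' i j <= q i j.
Proof.
move=> [hr [_ [_ h]]] i j; have [j0 [_ [h1 h2]]] := h i.
case: (eqVneq j j0) => [->|ne]; first by rewrite h1; lra.
by rewrite h2.
Qed.

Lemma step_sum (R : realType) (m n : nat) (q q' : 'I_m -> 'I_n -> R) r :
  greedy_step q r q' -> forall i, \sum_j q' i j = \sum_j q i j - r.
Proof.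
move=> [hr [_ [_ h]]] i; have [j0 [_ [h1 h2]]] := h i.
rewrite (bigD1 j0) //= [in RHS](bigD1 j0) //= h1.
rewrite (eq_bigr (fun j => q i j)); last by move=> j /h2.
lra.
Qed.

Lemma step_r (R : realType) (m n : nat) (q q' q'' : 'I_m -> 'I_n -> R) r r' :
  greedy_step q r q' -> greedy_step q' r' q'' -> r' <= r.
Proof.
move=> hs [_ [_ [hr' _]]]; have [_ [[i0 ->] _]] := hs.
apply: le_trans (hr' i0) _; apply: maxrem_mono; exact: step_le hs i0.
Qed.

Arguments C_le {R m n S x y}.
Arguments dist_le1 {R n p j}.
Arguments rem1 {R m n S}.
Arguments maxrem_ge {R m n q i j}.
Arguments maxrem_mono {R m n q q' i}.
Arguments step_le {R m n q q' r}.
Arguments step_sum {R m n q q' r}.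
Arguments step_r {R m n q q' q'' r r'}.

Theorem lemma6 (R : realType) (m n : nat) (S : 'I_m -> 'I_n -> R)
  (hm : (0 < m)%N) (hS : forall i, is_distribution (S i)) :
  (forall x1 x2 : R, 0 < x1 -> x1 <= x2 -> x2 <= 1 -> C_S S x1 <= C_S S x2) /\
  (forall (qs : nat -> 'I_m -> 'I_n -> R) (rs : nat -> R) (k : nat),
     qs 0%N = S ->
     (forall t, (t <= k)%N -> greedy_step (qs t) (rs t) (qs t.+1)) ->
     let x := 1 - \sum_(t < k) rs t in
     0 < x -> C_S S x <= rs k).
Proof.
split.
  move=> x1 x2 h1 h12 h2; rewrite {2}/C_S; apply: lb_le_inf.
    exists 1; split; first by rewrite ler01 lexx.
    exact: le_trans h2 (rem1 hm hS).
  move=> y [hy hx]; apply: C_le hy _; exact: le_trans h12 hx.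
move=> qs rs k q0 hst x hx.
have rpos : forall t, (t <= k)%N -> 0 < rs t by move=> t /hst [].
have rmono : forall d t, (t + d = k)%N -> rs k <= rs t.
  elim=> [|d IH] t htd; first by rewrite -htd addn0.
  have hh : rs k <= rs t.+1 by apply: IH; lia.
  apply: le_trans hh _.
  apply: (step_r (hst t _) (hst t.+1 _)); lia.
have inv : forall t, (t <= k)%N ->
   (forall i, \sum_j qs t i j = 1 - \sum_(s < t) rs s) /\
   (forall i j, qs t i j = S i j \/ qs t i j <= S i j - rs k).
  elim=> [|t IH] ht.
    rewrite q0 big_ord0 subr0; split=> [i|i j]; last by left.
    by have [_ [_ ->]] := hS i.
  have ht' : (t <= k)%N by lia.
  have [IH1 IH2] := IH ht'.
  have hs := hst t ht'.
  have hrk : rs k <= rs t by apply: (rmono (k - t)%N); lia.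
  split=> [i|i j].
    by rewrite (step_sum hs) IH1 big_ord_recr /=; lra.
  have [hr [_ [_ h]]] := hs; have [j0 [_ [h1 h2]]] := h i.
  case: (eqVneq j j0) => [->|ne].
    right; rewrite h1; case: (IH2 i j0) => e; [rewrite e|]; lra.
  by rewrite h2.
have [I1 I2] := inv k (leqnn k).
have hk := hst k (leqnn k).
have rk0 := rpos k (leqnn k).
have [r1|r1] := leP 1 (rs k).
  apply: le_trans r1; apply: C_le; first by rewrite ler01 lexx.
  rewrite /x; have hr := rem1 hm hS; suff hs0 : 0 <= \sum_(t < k) rs t by lra.
  by apply: sumr_ge0 => t _; apply/ltW/rpos/ltnW/ltn_ord.
apply: C_le; first by apply/andP; split; lra.
have [_ [[i0 hi0] _]] := hk.
rewrite /x -(I1 i0) /rem_mass_adv.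
apply: le_trans (le_bigmax _ _ i0).
apply: ler_sum => j _.
have hq : qs k i0 j <= rs k by rewrite hi0; exact: maxrem_ge.
rewrite /rm_term.
have [h0|h1] := leP (rs k) (S i0 j / 2); first by [].
have [h2|h2] := ltP (rs k) (S i0 j).
  case: (I2 i0 j) => e; last lra.
  by move: hq; rewrite e => hq; lra.
case: (I2 i0 j) => e; [rewrite e|]; lra.
Qed.
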